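(* Let $\rho$ be a monotone risk measure on $\mathcal M$. For $\alpha>0$ and $\boldsymbol\theta\in(0,\infty)^n$: (i) $\Lambda\otimes\mathbf P_{\alpha,\boldsymbol\theta}=\mathbf P_{\alpha,\Lambda\boldsymbol\theta}$ for all $\Lambda\in(0,\infty)^{n\times n}$; (ii) $\overline\rho(\mathbf P_{\alpha,\boldsymbol\theta})$ is decreasing in $\alpha$; (iii) $\overline\rho(\mathbf P_{\alpha,\boldsymbol\theta})$ is increasing in each component of $\boldsymbol\theta$.
   Context: Work on an atomless probability space. $\mathcal M$ is the set of cdfs on $\mathbb{R}$. A risk measure $\rho:\mathcal M\to\mathbb{R}$ is monotone if $\rho(F)\le\rho(G)$ whenever $F(x)\ge G(x)$ for all $x$. For $\mathbf F=(F_1,\dots,F_n)$, $\overline\rho(\mathbf F)=\sup\{\rho(H):H\text{ is the cdf of }X_1+\dots+X_n,\ X_i\sim F_i\}$. The Pareto cdf is $P_{\alpha,\theta}(x)=1-(\theta/x)^\alpha$ for $x\ge\theta$ (and $0$ for $x<\theta$), $\alpha,\theta>0$; $\mathbf P_{\alpha,\boldsymbol\theta}=(P_{\alpha,\theta_1},\dots,P_{\alpha,\theta_n})$. For a matrix $\Lambda=(\Lambda_{ij})$ with nonnegative entries, $\Lambda\otimes\mathbf F=(G_1,\dots,G_n)$ is the tuple of cdfs with $G_i^{-1}=\sum_j\Lambda_{ij}F_j^{-1}$, where $F^{-1}(p)=\inf\{x:F(x)\ge p\}$. ''Increasing/decreasing'' are in the non-strict sense. *)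

(* Defs.v *)
From HB Require Import structures.
From mathcomp Require Import all_boot all_order all_algebra.
From mathcomp Require Import all_classical all_reals all_analysis.
Set Implicit Arguments. Unset Strict Implicit. Unset Printing Implicit Defensive.
Import Order.TTheory GRing.Theory Num.Theory.
Import numFieldNormedType.Exports.
Local Open Scope classical_set_scope.
Local Open Scope ring_scope.

Section Defs.
Variable R : realType.

Definition is_cdf (F : R -> R) : Prop :=
  {homo F : x y / x <= y} /\
  (forall x, F y @[y --> x^'+] --> F x) /\
  (F y @[y --> -oo] --> (0:R)) /\ (F y @[y --> +oo] --> (1:R)).

Definition monotone_rm (rho : (R -> R) -> R) : Prop :=
  forall F G, is_cdf F -> is_cdf G -> (forall x, G x <= F x) -> rho F <= rho G.

(* generalized inverse F^{-1}(p) = inf {x : F x >= p} (used for p in (0,1)) *)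
Definition quantile (F : R -> R) (p : R) : R := inf [set x | p <= F x].

Definition pareto (alpha theta : R) (x : R) : R :=
  if theta <= x then 1 - (theta / x) `^ alpha else 0.

Definition pareto_vec (n : nat) (alpha : R) (theta : 'I_n -> R) : 'I_n -> R -> R :=
  fun i => pareto alpha (theta i).

(* G = Lam (x) F : G is a tuple of cdfs with G_i^{-1} = sum_j Lam_ij F_j^{-1} *)
Definition is_tensor (n : nat) (Lam : 'M[R]_n) (F G : 'I_n -> R -> R) : Prop :=
  forall i, is_cdf (G i) /\
    forall p, 0 < p < 1 ->
      quantile (G i) p = \sum_(j < n) Lam i j * quantile (F j) p.

Definition mat_vec (n : nat) (Lam : 'M[R]_n) (theta : 'I_n -> R) : 'I_n -> R :=
  fun i => \sum_(j < n) Lam i j * theta j.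
End Defs.

Section Prob.
Context {R : realType} {d : measure_display} {T : measurableType d}.

Definition atomless (P : probability T R) : Prop :=
  forall A, measurable A -> (0 < P A)%E ->
    exists2 B, measurable B /\ B `<=` A & (0 < P B)%E /\ (P B < P A)%E.

Definition cdf_of (P : probability T R) (X : T -> R) : R -> R :=
  fun x => fine (P [set w | X w <= x]).

Definition has_law (P : probability T R) (X : T -> R) (F : R -> R) : Prop :=
  measurable_fun setT X /\ cdf_of P X = F.

Definition rho_bar (P : probability T R) (rho : (R -> R) -> R) (n : nat)
    (F : 'I_n -> R -> R) : \bar R :=
  ereal_sup [set (rho (cdf_of P (fun w => \sum_(i < n) X i w)))%:E
            | X in [set X : 'I_n -> T -> R | forall i, has_law P (X i) (F i)]].
End Prob.

(* Main.v *)
Set Warnings "-all".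
Require Import Defs.
From HB Require Import structures.
From mathcomp Require Import all_boot all_order all_algebra.
From mathcomp Require Import all_classical all_reals all_analysis.
Import Order.TTheory GRing.Theory Num.Theory.
From mathcomp Require Import ring measurable_realfun.
Import numFieldNormedType.Exports.
Local Open Scope classical_set_scope.
Local Open Scope ring_scope.


Section Pareto.
Context {R : realType}.
Variables (a th : R).
Hypotheses (a0 : 0 < a) (th0 : 0 < th).

Lemma pareto_lt x : x < th -> pareto a th x = 0.
Proof. by move=> h; rewrite /pareto leNgt h. Qed.

Lemma pareto_ge x : th <= x -> pareto a th x = 1 - expR (a * (ln th - ln x)).
Proof.
move=> h; have x0 : 0 < x by exact: lt_le_trans th0 h.
rewrite /pareto h /powR gt_eqF ?divr_gt0 //.
by rewrite ln_div // posrE.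
Qed.

Lemma pareto_ge0 x : 0 <= pareto a th x.
Proof.
case: (ltP x th) => h; first by rewrite pareto_lt.
rewrite pareto_ge // subr_ge0 expR_le1 pmulr_rle0 // subr_le0.
have x0 : 0 < x by exact: lt_le_trans th0 h.
by rewrite ler_ln ?posrE.
Qed.

Lemma pareto_nd : {homo pareto a th : x y / x <= y}.
Proof.
move=> x y xy; case: (ltP x th) => hx; first by rewrite pareto_lt // pareto_ge0.
have hy := le_trans hx xy.
have x0 : 0 < x by exact: lt_le_trans th0 hx.
have y0 : 0 < y by exact: lt_le_trans x0 xy.
rewrite !pareto_ge // lerD2l lerN2 ler_expR ler_pM2l // lerD2l lerN2.
by rewrite ler_ln ?posrE.
Qed.

Definition pq p := expR (ln th - ln (1 - p) / a).

Lemma pq_ge p : 0 < p < 1 -> th <= pq p.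
Proof.
case/andP=> p0 p1; rewrite /pq -{1}(@lnK _ th) ?posrE // ler_expR lerDl.
rewrite oppr_ge0 pmulr_lle0 ?invr_gt0 //; apply: ln_le0.
by rewrite lerBlDr lerDl ltW.
Qed.

Lemma pareto_geP p x : 0 < p < 1 -> (p <= pareto a th x) <-> (pq p <= x).
Proof.
move=> hp; have := pq_ge p hp; case/andP: hp => p0 p1 hq.
case: (ltP x th) => hx.
  rewrite pareto_lt //; split => h; first by move: (lt_le_trans p0 h); rewrite ltxx.
  by move: (lt_le_trans hx (le_trans hq h)); rewrite ltxx.
have x0 : 0 < x by exact: lt_le_trans th0 hx.
have q1 : 0 < 1 - p by rewrite subr_gt0.
rewrite pareto_ge // lerBrDr -lerBrDl.
rewrite -{1}(@lnK _ (1 - p)) ?posrE // ler_expR.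
rewrite /pq -{2}(@lnK _ x) ?posrE // ler_expR.
rewrite -ler_pdivlMl // lerBlDr -lerBlDl.
by rewrite mulrC.
Qed.

Lemma pareto_quantile p : 0 < p < 1 -> quantile (pareto a th) p = pq p.
Proof.
move=> hp; rewrite /quantile.
have -> : [set x | p <= pareto a th x] = [set x | pq p <= x].
  by apply: funext => x; apply: propext; exact: (pareto_geP p x hp).
apply/eqP; rewrite eq_le; apply/andP; split.
  have h : has_lbound [set x | pq p <= x] by exists (pq p) => y.
  exact: (ge_inf h (lexx _)).
by apply: lb_le_inf; [exists (pq p) => /= | move=> y].
Qed.

Lemma pq_lin p : pq p = th * expR (- (ln (1 - p) / a)).
Proof. by rewrite /pq expRD lnK // posrE. Qed.


Definition pg y := 1 - expR (a * (ln th - ln y)).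

Lemma pg_cont x : 0 < x -> {for x, continuous pg}.
Proof.
move=> x0; rewrite /pg.
apply: cvgB; first exact: cvg_cst.
apply: (@continuous_comp _ _ _ (fun y => a * (ln th - ln y)) expR); last exact: continuous_expR.
apply: cvgMl_tmp; apply: cvgB; first exact: cvg_cst.
exact: continuous_ln.
Qed.

Lemma pareto_cdf : is_cdf (pareto a th).
Proof.
split; first exact: pareto_nd.
split; [|split].
- move=> x; case: (ltP x th) => hx.
    rewrite pareto_lt //; apply: (@cvg_trans _ ((fun=> (0:R)) @ x^'+)); last exact: cvg_cst.
    apply: near_eq_cvg; near=> y; rewrite pareto_lt //; near: y; exact: nbhs_right_lt.
  have x0 : 0 < x by exact: lt_le_trans th0 hx.
  rewrite pareto_ge //; apply: (@cvg_trans _ (pg @ x^'+)).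
    apply: near_eq_cvg; near=> y; rewrite pareto_ge //.
    have : x < y by near: y; exact: nbhs_right_gt.
    by move=> /ltW; exact: le_trans.
  apply: cvg_within_filter; exact: pg_cont.
- apply: (@cvg_trans _ ((fun=> (0:R)) @ -oo)); last exact: cvg_cst.
  apply: near_eq_cvg; near=> y; rewrite pareto_lt //; near: y; apply: nbhs_ninfty_lt; exact: num_real.
- apply/(@cvgrPdist_lt _ R^o) => e e0.
  near=> y.
  have hy : th <= y by apply: ltW; near: y; apply: nbhs_pinfty_gt; exact: num_real.
  have y0 : 0 < y by exact: lt_le_trans th0 hy.
  rewrite pareto_ge // opprB addrCA subrr addr0 ger0_norm ?expR_ge0 //.
  rewrite -[e](@lnK _ e) ?posrE // ltr_expR -ltr_pdivlMl // ltrBlDr -ltrBlDl.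
  rewrite -[ln y]/(ln y); have : expR (ln th - a^-1 * ln e) < y.
    by near: y; apply: nbhs_pinfty_gt; exact: num_real.
  by rewrite -{1}(@lnK _ y) ?posrE // ltr_expR.
Unshelve. all: by end_near.
Qed.
End Pareto.

Section T.
Context {R : realType}.
Variables (th t : R).
Hypotheses (th0 : 0 < th) (tht : th <= t).

Definition gth (y : R) := (t / th) * Num.max y th.
Definition hth (x : R) := x * th / t.

Lemma t0 : 0 < t. Proof. exact: lt_le_trans th0 tht. Qed.

Lemma gth_nd : {homo gth : x y / x <= y}.
Proof.
move=> x y xy; rewrite /gth; apply: ler_wpM2l; first by rewrite divr_ge0 // ltW // t0.
exact: le_max2.
Qed.

Lemma gth_ge y : y <= gth y.
Proof.
rewrite /gth; have hm : y <= Num.max y th by rewrite le_max lexx.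
apply: (le_trans hm).
have m0 : 0 <= Num.max y th by rewrite le_max (ltW th0) orbT.
rewrite ler_peMl //.
by rewrite ler_pdivlMr // mul1r.
Qed.

Lemma gth_lt x : x < t -> forall y, x < gth y.
Proof.
move=> hx y; apply: (lt_le_trans hx); rewrite /gth -ler_pdivrMl ?divr_gt0 ?t0 //.
by rewrite invf_div divfK ?gt_eqF ?t0 // le_max lexx orbT.
Qed.

Lemma gth_le x : t <= x -> forall y, gth y <= x <-> y <= hth x.
Proof.
move=> hx y; have tp := t0.
rewrite /gth /hth -ler_pdivlMl ?divr_gt0 // invf_div mulrAC ge_max.
rewrite [th * x]mulrC.
have -> : th <= x * th / t.
  by rewrite ler_pdivlMr // [x * th]mulrC ler_pM2l.
by rewrite andbT.
Qed.
End T.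

Section A.
Context {R : realType}.
Variables (th a1 a2 : R).
Hypotheses (th0 : 0 < th) (a10 : 0 < a1) (a12 : a1 <= a2).

Let r := a2 / a1.
Lemma r1 : 1 <= r. Proof. by rewrite /r ler_pdivlMr // mul1r. Qed.
Lemma r0 : 0 < r. Proof. exact: lt_le_trans ltr01 r1. Qed.

Definition ga (y : R) := expR (ln th + r * (ln (Num.max y th) - ln th)).
Definition ha (x : R) := expR (ln th + (ln x - ln th) / r).

Lemma m0 y : 0 < Num.max y th. Proof. by rewrite lt_max th0 orbT. Qed.
Lemma mge y : th <= Num.max y th. Proof. by rewrite le_max lexx orbT. Qed.
Lemma L0 y : 0 <= ln (Num.max y th) - ln th.
Proof. by rewrite subr_ge0 ler_ln ?posrE ?m0 ?mge. Qed.

Lemma ga_nd : {homo ga : x y / x <= y}.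
Proof.
move=> x y xy; rewrite /ga ler_expR lerD2l ler_wpM2l ?(ltW r0) // lerD2r.
by rewrite ler_ln ?posrE ?m0 // le_max2.
Qed.

Lemma ga_ge y : y <= ga y.
Proof.
have hm : y <= Num.max y th by rewrite le_max lexx.
apply: (le_trans hm); rewrite -{1}(@lnK _ (Num.max y th)) ?posrE ?m0 //.
rewrite ler_expR -lerBlDl ler_peMl //; [exact: L0 | exact: r1].
Qed.

Lemma ga_lt x : x < th -> forall y, x < ga y.
Proof.
move=> hx y; apply: (lt_le_trans hx); rewrite -{1}(@lnK _ th) ?posrE //.
by rewrite ler_expR lerDl mulr_ge0 ?L0 ?(ltW r0).
Qed.

Lemma ha_ge x : th <= x -> th <= ha x.
Proof.
move=> hx; have x0 : 0 < x by exact: lt_le_trans th0 hx.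
rewrite /ha -{1}(@lnK _ th) ?posrE // ler_expR lerDl divr_ge0 ?(ltW r0) //.
by rewrite subr_ge0 ler_ln ?posrE.
Qed.

Lemma ga_le x : th <= x -> forall y, ga y <= x <-> y <= ha x.
Proof.
move=> hx y; have x0 : 0 < x by exact: lt_le_trans th0 hx.
rewrite /ga -{1}(@lnK _ x) ?posrE // ler_expR -lerBrDl -ler_pdivlMl ?r0 //.
rewrite lerBlDl.
have -> : (ln (Num.max y th) <= ln th + r^-1 * (ln x - ln th)) = (Num.max y th <= ha x).
  by rewrite /ha -ler_expR lnK ?posrE ?m0 // mulrC.
by rewrite ge_max ha_ge // andbT.
Qed.

Lemma ha_ln x : 0 < x -> a2 * (ln th - ln (ha x)) = a1 * (ln th - ln x).
Proof.
move=> x0; rewrite /ha expRK /r.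
have a20 : 0 < a2 by exact: lt_le_trans a10 a12.
field; by rewrite ?gt_eqF.
Qed.
End A.

Section S.
Context {R : realType} {d : measure_display} {T : measurableType d}.
Variable P : probability T R.

Lemma is_cdf_of (X : T -> R) : measurable_fun setT X -> is_cdf (cdf_of P X).
Proof.
move=> mX.
have mX' : X \in mfun by apply: mem_set.
pose XX : {RV P >-> R} := mfun_Sub mX'.
have E : cdf_of P X = fine \o cdf XX.
  apply: funext => r /=; rewrite /cdf_of /cdf /distribution /=.
  congr (fine (P _)).
rewrite E /is_cdf; split; [|split; [|split]].
- move=> x y xy /=; rewrite fine_le ?cdf_nondecreasing //; exact: fin_num_measure.
- move=> x; have h := @cdf_right_continuous _ _ _ P XX x.
  rewrite -(@fineK _ (cdf XX x)) in h; last exact: fin_num_measure.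
  exact: fine_cvg h.
- exact: fine_cvg (@cvg_cdfNy0 _ _ _ P XX).
- exact: fine_cvg (@cvg_cdfy1 _ _ _ P XX).
Qed.

Lemma meas_le (Y : T -> R) : measurable_fun setT Y -> forall x, measurable [set w | Y w <= x].
Proof.
move=> mY x; have := mY measurableT _ (measurable_itv `]-oo, x]).
by rewrite setTI.
Qed.

Lemma cdf_of_le (X Y : T -> R) : measurable_fun setT X -> measurable_fun setT Y ->
  (forall w, X w <= Y w) -> forall x, cdf_of P Y x <= cdf_of P X x.
Proof.
move=> mX mY XY x; have mYx := @meas_le Y mY x; have mXx := @meas_le X mX x.
rewrite /cdf_of fine_le ?fin_num_measure //.
apply: le_measure; rewrite ?inE //.
by move=> w /= Yw; exact: le_trans (XY w) Yw.
Qed.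

Lemma rho_bar_mono (rho : (R -> R) -> R) (Hrho : monotone_rm rho) n
  (F G : 'I_n -> R -> R) :
  (forall X : 'I_n -> T -> R, (forall i, has_law P (X i) (F i)) ->
    exists Y : 'I_n -> T -> R, (forall i, has_law P (Y i) (G i)) /\ forall i w, X i w <= Y i w) ->
  (rho_bar P rho F <= rho_bar P rho G)%E.
Proof.
move=> H; apply: ge_ereal_sup => _ [X hX <-].
have [Y [hY XY]] := H X hX.
apply: le_ereal_sup_tmp; exists (rho (cdf_of P (fun w => \sum_(i < n) Y i w)))%:E.
  by exists Y.
have mX : measurable_fun setT (fun w => \sum_(i < n) X i w).
  by apply: measurable_sum => i; case: (hX i).
have mY : measurable_fun setT (fun w => \sum_(i < n) Y i w).
  by apply: measurable_sum => i; case: (hY i).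
rewrite lee_fin; apply: Hrho; try exact: is_cdf_of.
apply: cdf_of_le => // w; apply: ler_sum => i _; exact: XY.
Qed.

Lemma transform (X : T -> R) (F G : R -> R) (g h : R -> R) (c : R) :
  has_law P X F -> {homo g : x y / x <= y} ->
  (forall x, x < c -> G x = 0 /\ forall y, x < g y) ->
  (forall x, c <= x -> G x = F (h x) /\ forall y, (g y <= x <-> y <= h x)) ->
  has_law P (g \o X) G.
Proof.
case=> mX lawX gnd H1 H2; split.
  apply: measurableT_comp mX; exact: nondecreasing_measurable.
apply: funext => x; rewrite /cdf_of; case: (ltP x c) => hx.
  have [-> Hy] := H1 x hx.
  have -> : [set w | (g \o X) w <= x] = set0.
    apply/seteqP; split => w //= hw.
    by move: (lt_le_trans (Hy (X w)) hw); rewrite ltxx.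
  by rewrite measure0.
have [-> Hy] := H2 x hx; rewrite -lawX /cdf_of.
congr (fine (P _)); apply: funext => w; apply: propext; exact: Hy.
Qed.
End S.

Theorem proposition14 (R : realType) (d : measure_display) (T : measurableType d)
  (P : probability T R) (HP : atomless P)
  (rho : (R -> R) -> R) (Hrho : monotone_rm rho)
  (n : nat) (alpha : R) (theta : 'I_n -> R)
  (Halpha : 0 < alpha) (Htheta : forall i, 0 < theta i) :
  (forall Lam : 'M[R]_n, (forall i j, 0 < Lam i j) ->
     is_tensor Lam (pareto_vec alpha theta) (pareto_vec alpha (mat_vec Lam theta)))
  /\
  (forall a1 a2 : R, 0 < a1 -> a1 <= a2 ->
     (rho_bar P rho (pareto_vec a2 theta) <= rho_bar P rho (pareto_vec a1 theta))%E)
  /\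
  (forall (k : 'I_n) (t : R), theta k <= t ->
     (rho_bar P rho (pareto_vec alpha theta)
      <= rho_bar P rho (pareto_vec alpha (fun i => if i == k then t else theta i)))%E).
Proof.
split.
  move=> Lam hL i; rewrite /pareto_vec.
  have hpos : 0 < mat_vec Lam theta i.
    rewrite /mat_vec (bigD1 i) //=.
    apply: (lt_le_trans (mulr_gt0 (hL i i) (Htheta i))).
    rewrite lerDl; apply: sumr_ge0 => j _; exact: ltW (mulr_gt0 (hL i j) (Htheta j)).
  split; first exact: pareto_cdf.
  move=> p hp; rewrite (pareto_quantile _ _ Halpha hpos _ hp) (pq_lin _ _ hpos).
  under eq_bigr => j _ do rewrite (pareto_quantile _ _ Halpha (Htheta j) _ hp) (pq_lin _ _ (Htheta j)).
  by rewrite /mat_vec mulr_suml; apply: eq_bigr => j _; rewrite mulrA.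
split.
  move=> a1 a2 ha1 ha12; apply: rho_bar_mono => // X hX.
  exists (fun i => ga (theta i) a1 a2 \o X i); split; last first.
    by move=> i w; exact: (ga_ge _ _ _ (Htheta i) ha1 ha12).
  move=> i; apply: (@transform _ _ _ P _ _ _ _ (ha (theta i) a1 a2) (theta i) (hX i)).
  - exact: (ga_nd _ _ _ (Htheta i) ha1 ha12).
  - move=> x hx; split; first by rewrite /pareto_vec pareto_lt.
    exact: (ga_lt _ _ _ (Htheta i) ha1 ha12 _ hx).
  - move=> x hx; split; last exact: (ga_le _ _ _ (Htheta i) ha1 ha12 _ hx).
    rewrite /pareto_vec.
    have x0 : 0 < x by exact: lt_le_trans (Htheta i) hx.
    rewrite (pareto_ge _ _ (Htheta i) _ hx) (pareto_ge _ _ (Htheta i) _ (ha_ge _ _ _ (Htheta i) ha1 ha12 _ hx)).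
    by rewrite ha_ln.
move=> k t hk; apply: rho_bar_mono => // X hX.
have t0 : 0 < t by exact: lt_le_trans (Htheta k) hk.
exists (fun i => if i == k then gth (theta k) t \o X i else X i); split; last first.
  by move=> i w; case: eqP => _ //=; exact: gth_ge.
move=> i; rewrite /pareto_vec; case: eqP => [->|_]; last exact: hX.
apply: (@transform _ _ _ P _ _ _ _ (hth (theta k) t) t (hX k)).
- exact: gth_nd.
- move=> x hx; split; first by rewrite pareto_lt.
  exact: gth_lt.
- move=> x hx; split; last exact: gth_le.
  have x0 : 0 < x by exact: lt_le_trans t0 hx.
  have hh : theta k <= hth (theta k) t x.
    by rewrite /hth ler_pdivlMr // [x * _]mulrC ler_pM2l.
rewrite /pareto_vec.   rewrite (pareto_ge _ _ t0 _ hx) (pareto_ge _ _ (Htheta k) _ hh) /hth.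
  rewrite ln_div ?posrE ?mulr_gt0 // lnM ?posrE //.
  congr (_ - expR _); ring.
Qed.
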